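(* Let $\Delta_1$ and $\Delta_2$ be non-trivial finitely generated groups. Then the free product $\Delta_1\star\Delta_2$ is presentable by a product if and only if $\Delta_1\cong\mathbb{Z}/2\cong\Delta_2$.
   Context: An infinite group $\Gamma$ is presentable by a product if there exist groups $\Gamma_1,\Gamma_2$ and a homomorphism $\varphi\colon\Gamma_1\times\Gamma_2\to\Gamma$ whose image has finite index in $\Gamma$ and such that both $\varphi(\Gamma_1)$ and $\varphi(\Gamma_2)$ are infinite. *)

(* Defs.v *)
From Stdlib Require Import List.
Import ListNotations.

Record group := Group {
  carrier :> Type;
  gmul : carrier -> carrier -> carrier;
  gone : carrier;
  ginv : carrier -> carrier;
  gmulA : forall x y z, gmul x (gmul y z) = gmul (gmul x y) z;
  gmul1l : forall x, gmul gone x = x;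
  gmul1r : forall x, gmul x gone = x;
  gmulVl : forall x, gmul (ginv x) x = gone;
  gmulVr : forall x, gmul x (ginv x) = gone
}.
Arguments gmul {g}.
Arguments gone {g}.
Arguments ginv {g}.

Definition is_hom (G H : group) (f : G -> H) : Prop :=
  forall x y, f (gmul x y) = gmul (f x) (f y).

Definition isomorphic (G H : group) : Prop :=
  exists (f : G -> H) (g : H -> G),
    is_hom G H f /\ is_hom H G g /\
    (forall x, g (f x) = x) /\ (forall y, f (g y) = y).

Definition finite_set {T : Type} (A : T -> Prop) : Prop :=
  exists l : list T, forall x, A x -> In x l.

Definition is_subgroup (G : group) (H : G -> Prop) : Prop :=
  H gone /\ (forall x y, H x -> H y -> H (gmul x y)) /\
  (forall x, H x -> H (ginv x)).

Definition image {G H : group} (f : G -> H) : H -> Prop :=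
  fun y => exists x, f x = y.

Definition finite_index (G : group) (H : G -> Prop) : Prop :=
  exists l : list (carrier G),
    forall x : G, exists g h, In g l /\ H h /\ x = gmul g h.

Definition infinite_group (G : group) : Prop :=
  ~ finite_set (fun _ : G => True).

Definition nontrivial (G : group) : Prop := exists x : G, x <> gone.

Definition generated (G : group) (l : list (carrier G)) (x : G) : Prop :=
  forall H : G -> Prop, is_subgroup G H -> (forall y, In y l -> H y) -> H x.

Definition finitely_generated (G : group) : Prop :=
  exists l : list (carrier G), forall x, generated G l x.

Definition prod_group (G1 G2 : group) : group.
Proof.
  refine (@Group (G1 * G2)%type
    (fun x y => (gmul (fst x) (fst y), gmul (snd x) (snd y)))
    (gone, gone)
    (fun x => (ginv (fst x), ginv (snd x))) _ _ _ _ _).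
  - intros [a b] [c d] [e f]; simpl; now rewrite !gmulA.
  - intros [a b]; simpl; now rewrite !gmul1l.
  - intros [a b]; simpl; now rewrite !gmul1r.
  - intros [a b]; simpl; now rewrite !gmulVl.
  - intros [a b]; simpl; now rewrite !gmulVr.
Defined.

Definition presentable_by_product (Gam : group) : Prop :=
  infinite_group Gam /\
  exists (G1 G2 : group) (phi : prod_group G1 G2 -> Gam),
    is_hom (prod_group G1 G2) Gam phi /\
    finite_index Gam (image phi) /\
    ~ finite_set (image (fun a : G1 => phi (a, gone))) /\
    ~ finite_set (image (fun b : G2 => phi (gone, b))).

Definition is_free_product (D1 D2 G : group) (i1 : D1 -> G) (i2 : D2 -> G)
  : Prop :=
  is_hom D1 G i1 /\ is_hom D2 G i2 /\
  forall (H : group) (f1 : D1 -> H) (f2 : D2 -> H),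
    is_hom D1 H f1 -> is_hom D2 H f2 ->
    exists f : G -> H,
      is_hom G H f /\ (forall x, f (i1 x) = f1 x) /\ (forall y, f (i2 y) = f2 y) /\
      forall f' : G -> H,
        is_hom G H f' -> (forall x, f' (i1 x) = f1 x) ->
        (forall y, f' (i2 y) = f2 y) -> forall z, f' z = f z.

Definition Z2 : group.
Proof.
  refine (@Group bool xorb false (fun b => b) _ _ _ _ _).
  - intros [] [] []; reflexivity.
  - intros []; reflexivity.
  - intros []; reflexivity.
  - intros []; reflexivity.
  - intros []; reflexivity.
Defined.

(* Main.v *)
Require Import Defs.
From Stdlib Require Import List Arith Lia ZArith Bool.
From Stdlib Require Import Classical ClassicalEpsilon FunctionalExtensionality ProofIrrelevance.
Import ListNotations.

Notation emi := excluded_middle_informative.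

Section GroupLemmas.
Variable G : group.
Lemma mul_cancel_l (a x y : G) : gmul a x = gmul a y -> x = y.
Proof.
  intro H. rewrite <- (gmul1l G x), <- (gmul1l G y), <- (gmulVl G a), <- !gmulA, H.
  reflexivity.
Qed.
Lemma mul_cancel_r (a x y : G) : gmul x a = gmul y a -> x = y.
Proof.
  intro H. rewrite <- (gmul1r G x), <- (gmul1r G y), <- (gmulVr G a), !gmulA, H.
  reflexivity.
Qed.
Lemma inv_unique (x y : G) : gmul x y = gone -> y = ginv x.
Proof. intro H. apply (mul_cancel_l x). now rewrite H, gmulVr. Qed.
Lemma inv_inv (x : G) : ginv (ginv x) = x.
Proof. symmetry. apply inv_unique. apply gmulVl. Qed.
Lemma inv_mul (x y : G) : ginv (gmul x y) = gmul (ginv y) (ginv x).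
Proof.
  symmetry. apply inv_unique.
  rewrite <- gmulA, (gmulA G y), gmulVr, gmul1l, gmulVr. reflexivity.
Qed.
Lemma inv_one : ginv (@gone G) = gone.
Proof. symmetry. apply inv_unique. apply gmul1l. Qed.
Lemma mul_eq_one (x y : G) : gmul x y = gone -> x = ginv y.
Proof.
  intro H. apply (mul_cancel_r y). now rewrite H, gmulVl.
Qed.
Lemma inv_eq_one (x : G) : ginv x = gone -> x = gone.
Proof. intro H. rewrite <- (inv_inv x), H. apply inv_one. Qed.
End GroupLemmas.
Arguments mul_cancel_l {G}. Arguments mul_cancel_r {G}. Arguments inv_unique {G}.
Arguments inv_inv {G}. Arguments inv_mul {G}. Arguments inv_one {G}. Arguments mul_eq_one {G}. Arguments inv_eq_one {G}.

Lemma hom_one {G H : group} {f : G -> H} : is_hom G H f -> f gone = gone.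
Proof.
  intro Hf. apply (mul_cancel_l (f gone)). rewrite <- Hf, !gmul1r. reflexivity.
Qed.
Lemma hom_inv {G H : group} {f : G -> H} : is_hom G H f -> forall x, f (ginv x) = ginv (f x).
Proof.
  intros Hf x. apply inv_unique. rewrite <- Hf, gmulVr. apply (hom_one Hf).
Qed.
Lemma hom_comp (G H K : group) (f : G -> H) (g : H -> K) :
  is_hom G H f -> is_hom H K g -> is_hom G K (fun x => g (f x)).
Proof. intros Hf Hg x y. now rewrite Hf, Hg. Qed.

Record perm (X : Type) := Perm {
  pf : X -> X; pb : X -> X;
  pfb : forall x, pf (pb x) = x; pbf : forall x, pb (pf x) = x }.
Arguments pf {X}. Arguments pb {X}. Arguments pfb {X}. Arguments pbf {X}.

Lemma perm_ext X (p q : perm X) : (forall x, pf p x = pf q x) -> p = q.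
Proof.
  destruct p as [f1 b1 h1 h2], q as [f2 b2 h3 h4]; simpl; intro H.
  assert (f1 = f2) by (apply functional_extensionality; auto). subst f2.
  assert (b1 = b2).
  { apply functional_extensionality; intro x.
    rewrite <- (h4 (b1 x)). rewrite h1. reflexivity. }
  subst b2. f_equal; apply proof_irrelevance.
Qed.

Definition perm_mul {X} (p q : perm X) : perm X.
Proof.
  refine (Perm X (fun x => pf p (pf q x)) (fun x => pb q (pb p x)) _ _).
  - intros. now rewrite !pfb.
  - intros. now rewrite !pbf.
Defined.

Definition perm_group (X : Type) : group.
Proof.
  refine (@Group (perm X) perm_mul
    (Perm X (fun x => x) (fun x => x) (fun x => eq_refl) (fun x => eq_refl))
    (fun p => Perm X (pb p) (pf p) (pbf p) (pfb p)) _ _ _ _ _).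
  all: intros; apply perm_ext; simpl; intros; rewrite ?pfb, ?pbf; reflexivity.
Defined.

Fixpoint gpow {G : group} (x : G) (n : nat) : G :=
  match n with 0 => gone | S n => gmul x (gpow x n) end.

Definition commute {G : group} (x y : G) := gmul x y = gmul y x.

Section ListCom.
Variable T : Type.
Fixpoint lpow (h : list T) (n : nat) : list T :=
  match n with 0 => [] | S n => h ++ lpow h n end.

Lemma lpow_com (h x : list T) n : x ++ h = h ++ x -> x ++ lpow h n = lpow h n ++ x.
Proof.
  intro H. induction n; simpl.
  - now rewrite app_nil_r.
  - rewrite app_assoc, H, <- app_assoc, IHn, app_assoc. reflexivity.
Qed.

Lemma lpow_len (h : list T) n : h <> [] -> n <= length (lpow h n).
Proof.
  intro Hh. induction n; simpl; [lia|]. rewrite length_app.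
  destruct h; [congruence|simpl; lia].
Qed.

Lemma com_prefix (h x : list T) n : x ++ h = h ++ x -> length x <= length (lpow h n) ->
  x = firstn (length x) (lpow h n).
Proof.
  intros H Hl. pose proof (lpow_com h x n H) as E.
  assert (E2 := f_equal (firstn (length x)) E).
  rewrite firstn_app, Nat.sub_diag, firstn_all, firstn_O, app_nil_r in E2.
  rewrite firstn_app in E2.
  replace (length x - length (lpow h n)) with 0 in E2 by lia.
  rewrite firstn_O, app_nil_r in E2. exact E2.
Qed.

Lemma com_split (h x y : list T) : h <> [] -> x ++ h = h ++ x -> y ++ h = h ++ y ->
  length x <= length y -> exists y', y = x ++ y' /\ y' ++ h = h ++ y'.
Proof.
  intros Hh Hx Hy Hl.
  pose proof (lpow_len h (length y) Hh) as Hn.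
  pose proof (com_prefix h x (length y) Hx ltac:(lia)) as Ex.
  pose proof (com_prefix h y (length y) Hy ltac:(lia)) as Ey.
  exists (skipn (length x) y).
  assert (Exy : x = firstn (length x) y).
  { rewrite Ey, firstn_firstn. rewrite Nat.min_l by lia. exact Ex. }
  assert (Y : y = x ++ skipn (length x) y).
  { rewrite Exy at 1. symmetry. apply firstn_skipn. }
  split; [exact Y|].
  apply (app_inv_head x). rewrite app_assoc, <- Y, Hy, Y at 1.
  rewrite !app_assoc, Hx. reflexivity.
Qed.

Lemma com_trans_aux n : forall (h x y : list T), length x + length y <= n -> h <> [] ->
  x ++ h = h ++ x -> y ++ h = h ++ y -> x ++ y = y ++ x.
Proof.
  induction n as [n IH] using lt_wf_ind.
  intros h x y Hn Hh Hx Hy.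
  destruct (le_lt_dec (length x) (length y)) as [L|L].
  - destruct x as [|a x0]; [now rewrite app_nil_r|].
    destruct (com_split h (a :: x0) y Hh Hx Hy L) as [y' [E Hy']].
    assert (IHx := IH (length (a :: x0) + length y') ltac:(subst y; rewrite length_app in Hn; simpl in *; lia)
      h (a :: x0) y' (le_n _) Hh Hx Hy').
    subst y. rewrite IHx at 1. rewrite app_assoc. reflexivity.
  - destruct y as [|a y0]; [now rewrite app_nil_r|].
    destruct (com_split h (a :: y0) x Hh Hy Hx ltac:(lia)) as [x' [E Hx']].
    assert (IHx := IH (length (a :: y0) + length x') ltac:(subst x; rewrite length_app in Hn; simpl in *; lia)
      h (a :: y0) x' (le_n _) Hh Hy Hx').
    subst x. rewrite IHx at 2. rewrite app_assoc. reflexivity.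
Qed.

Lemma com_trans (h x y : list T) : h <> [] ->
  x ++ h = h ++ x -> y ++ h = h ++ y -> x ++ y = y ++ x.
Proof. intros. eapply com_trans_aux; eauto. Qed.
End ListCom.

Set Implicit Arguments.
Section Words.
Variables A B : group.
Definition lt := (carrier A + carrier B)%type.
Definition side (l : lt) : bool := match l with inl _ => true | inr _ => false end.
Definition ntriv (l : lt) : Prop := match l with inl a => a <> gone | inr b => b <> gone end.
Fixpoint reduced (w : list lt) : Prop :=
  match w with
  | [] => True
  | l :: r => ntriv l /\ match r with [] => True | l' :: _ => side l <> side l' end /\ reduced r
  end.

Definition act1 (x : A) (w : list lt) : list lt :=
  match w with
  | inl y :: r => if emi (gmul x y = gone) then r else inl (gmul x y) :: r
  | _ => if emi (x = gone) then w else inl x :: w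
  end.
Definition act2 (x : B) (w : list lt) : list lt :=
  match w with
  | inr y :: r => if emi (gmul x y = gone) then r else inr (gmul x y) :: r
  | _ => if emi (x = gone) then w else inr x :: w
  end.

Lemma reduced_tail l w : reduced (l :: w) -> reduced w.
Proof. simpl; tauto. Qed.

Set Warnings "-intuition-auto-with-star".
Ltac dem := repeat match goal with |- context [emi ?P] => destruct (emi P) end.

Lemma act1_reduced x w : reduced w -> reduced (act1 x w).
Proof.
  destruct w as [|[y|y] r]; simpl; intros; dem; simpl; intuition.
  all: try (destruct r as [|[z|z] r]; simpl in *; intuition).
Qed.
Lemma act2_reduced x w : reduced w -> reduced (act2 x w).
Proof.
  destruct w as [|[y|y] r]; simpl; intros; dem; simpl; intuition.
  all: try (destruct r as [|[z|z] r]; simpl in *; intuition).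
Qed.

Lemma act1_len x w : length (act1 x w) <= S (length w).
Proof. destruct w as [|[y|y] r]; simpl; dem; simpl; lia. Qed.
Lemma act2_len x w : length (act2 x w) <= S (length w).
Proof. destruct w as [|[y|y] r]; simpl; dem; simpl; lia. Qed.

Lemma act1_one w : reduced w -> act1 gone w = w.
Proof.
  destruct w as [|[y|y] r]; simpl; intros; dem; try rewrite gmul1l in *; intuition.
Qed.
Lemma act2_one w : reduced w -> act2 gone w = w.
Proof.
  destruct w as [|[y|y] r]; simpl; intros; dem; try rewrite gmul1l in *; intuition.
Qed.

Lemma act1_cons a w : reduced (inl a :: w) -> act1 a w = inl a :: w.
Proof.
  destruct w as [|[y|y] r]; simpl; intros; dem; intuition.
Qed.
Lemma act2_cons a w : reduced (inr a :: w) -> act2 a w = inr a :: w.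
Proof.
  destruct w as [|[y|y] r]; simpl; intros; dem; intuition.
Qed.

Lemma act1_mul x y w : reduced w -> act1 x (act1 y w) = act1 (gmul x y) w.
Proof.
  destruct w as [|[z|z] r]; simpl; intros Hr.
  - dem; subst; simpl; dem; try rewrite gmul1r in *; try congruence.
  - destruct Hr as [Hz [Hs Hr]].
    destruct (emi (gmul y z = gone)) as [e|e].
    + assert (E : gmul (gmul x y) z = x) by (now rewrite <- gmulA, e, gmul1r).
      rewrite E. destruct r as [|[u|u] r']; simpl in *; dem; try congruence.
    + simpl. rewrite !gmulA. dem; congruence.
  - dem; subst; simpl; dem; try rewrite gmul1r in *; try congruence.
Qed.
Lemma act2_mul x y w : reduced w -> act2 x (act2 y w) = act2 (gmul x y) w.
Proof.
  destruct w as [|[z|z] r]; simpl; intros Hr.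
  - dem; subst; simpl; dem; try rewrite gmul1r in *; try congruence.
  - dem; subst; simpl; dem; try rewrite gmul1r in *; try congruence.
  - destruct Hr as [Hz [Hs Hr]].
    destruct (emi (gmul y z = gone)) as [e|e].
    + assert (E : gmul (gmul x y) z = x) by (now rewrite <- gmulA, e, gmul1r).
      rewrite E. destruct r as [|[u|u] r']; simpl in *; dem; try congruence.
    + simpl. rewrite !gmulA. dem; congruence.
Qed.

Fixpoint lastl (w : list lt) : option lt :=
  match w with [] => None | [a] => Some a | _ :: r => lastl r end.
Definition junc (u v : list lt) : Prop :=
  match lastl u, hd_error v with Some a, Some b => side a <> side b | _, _ => True end.

Lemma lastl_cons l u : u <> [] -> lastl (l :: u) = lastl u.
Proof. destruct u; [congruence|reflexivity]. Qed.
Lemma lastl_snoc u a : lastl (u ++ [a]) = Some a.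
Proof. induction u as [|b u IH]; [reflexivity|]. simpl app. rewrite lastl_cons; [exact IH|]. destruct u; discriminate. Qed.

Lemma reduced_app u v : reduced (u ++ v) <-> reduced u /\ reduced v /\ junc u v.
Proof.
  unfold junc. induction u as [|l u IH].
  - simpl. destruct (hd_error v); tauto.
  - destruct u as [|l' u'].
    + simpl. destruct v as [|b v']; simpl; tauto.
    + rewrite lastl_cons by discriminate.
      change ((l :: l' :: u') ++ v) with (l :: ((l' :: u') ++ v)).
      change (reduced (l :: (l' :: u') ++ v)) with
        (ntriv l /\ side l <> side l' /\ reduced ((l' :: u') ++ v)).
      change (reduced (l :: l' :: u')) with (ntriv l /\ side l <> side l' /\ reduced (l' :: u')).
      rewrite IH. tauto.
Qed.

Lemma reduced_app_intro u v : reduced u -> reduced v -> junc u v -> reduced (u ++ v).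
Proof. intros. apply reduced_app; tauto. Qed.

Definition linv (l : lt) : lt := match l with inl a => inl (ginv a) | inr b => inr (ginv b) end.
Definition winv (w : list lt) : list lt := rev (map linv w).

Lemma side_linv l : side (linv l) = side l.
Proof. destruct l; reflexivity. Qed.
Lemma ntriv_linv l : ntriv l -> ntriv (linv l).
Proof. destruct l; simpl; intros H E; apply H, inv_eq_one, E. Qed.
Lemma winv_cons l w : winv (l :: w) = winv w ++ [linv l].
Proof. reflexivity. Qed.
Lemma winv_len w : length (winv w) = length w.
Proof. unfold winv. now rewrite length_rev, length_map. Qed.
Lemma lastl_winv w : lastl (winv w) = option_map linv (hd_error w).
Proof. destruct w; [reflexivity|]. rewrite winv_cons, lastl_snoc. reflexivity. Qed.
Lemma hd_winv w : hd_error (winv w) = option_map linv (lastl w).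
Proof.
  induction w as [|l w IH]; [reflexivity|].
  rewrite winv_cons. destruct w as [|l' w'].
  - reflexivity.
  - rewrite lastl_cons by discriminate. rewrite <- IH.
    destruct (winv (l' :: w')) eqn:E; [|reflexivity].
    apply (f_equal (@length _)) in E. rewrite winv_len in E. discriminate.
Qed.

Lemma reduced_winv w : reduced w -> reduced (winv w).
Proof.
  induction w as [|l w IH]; [simpl; auto|].
  intros H. rewrite winv_cons. apply reduced_app_intro.
  - apply IH. exact (proj2 (proj2 H)).
  - simpl. split; [apply ntriv_linv; apply H|auto].
  - unfold junc. rewrite lastl_winv. simpl. destruct w as [|l' w']; simpl; auto.
    rewrite !side_linv. destruct H as [_ [H _]]. auto.
Qed.
End Words.

Set Implicit Arguments.

Section FP.
Variables (D1 D2 G : group) (i1 : D1 -> G) (i2 : D2 -> G).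
Hypothesis FP : is_free_product D1 D2 G i1 i2.
Notation L := (lt D1 D2).
Definition iL (l : L) : G := match l with inl a => i1 a | inr b => i2 b end.
Definition eval (w : list L) : G := fold_right (fun l g => gmul (iL l) g) gone w.

Lemma eval_app u v : eval (u ++ v) = gmul (eval u) (eval v).
Proof. induction u; simpl; [now rewrite gmul1l| now rewrite IHu, gmulA]. Qed.

Lemma hom1 : is_hom D1 G i1. Proof. exact (proj1 FP). Qed.
Lemma hom2 : is_hom D2 G i2. Proof. exact (proj1 (proj2 FP)). Qed.

Lemma fp_unique (H : group) (f g : G -> H) : is_hom G H f -> is_hom G H g ->
  (forall x, f (i1 x) = g (i1 x)) -> (forall y, f (i2 y) = g (i2 y)) -> forall z, f z = g z.
Proof.
  intros Hf Hg E1 E2 z. destruct FP as [h1 [h2 U]].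
  destruct (U H (fun x => f (i1 x)) (fun y => f (i2 y)) (hom_comp _ _ _ _ _ h1 Hf)
     (hom_comp _ _ _ _ _ h2 Hf)) as [F [HF [F1 [F2 FU]]]].
  rewrite (FU f Hf (fun _ => eq_refl) (fun _ => eq_refl) z).
  symmetry. apply FU; auto; intros; symmetry; auto.
Qed.

Lemma iL_linv l : gmul (iL (linv l)) (iL l) = gone.
Proof.
  destruct l; simpl.
  - rewrite <- hom1, gmulVl. apply (hom_one hom1).
  - rewrite <- hom2, gmulVl. apply (hom_one hom2).
Qed.

Definition Sg (x : G) := exists w, x = eval w.
Definition sb (x : G) : bool := if emi (Sg x) then true else false.

Lemma Sg_left l y : Sg (gmul (iL l) y) <-> Sg y.
Proof.
  split; intros [w E].
  - exists (linv l :: w). simpl. rewrite <- E, gmulA, iL_linv, gmul1l. reflexivity.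
  - exists (l :: w). simpl. now rewrite E.
Qed.

Lemma sb_left l y : sb (gmul (iL l) y) = sb y.
Proof.
  unfold sb. destruct (emi (Sg (gmul (iL l) y))) as [h|h], (emi (Sg y)) as [h'|h'];
    try reflexivity; exfalso; apply Sg_left in h || (apply h; apply Sg_left); auto.
Qed.

Definition twist (t : G -> bool) (g : G) : perm (G * bool).
Proof.
  refine (Perm _ (fun p => (gmul g (fst p), xorb (snd p) (xorb (t (fst p)) (t (gmul g (fst p))))))
                 (fun p => (gmul (ginv g) (fst p), xorb (snd p) (xorb (t (fst p)) (t (gmul (ginv g) (fst p)))))) _ _).
  - intros [x b]; simpl. rewrite gmulA, gmulVr, gmul1l.
    destruct b, (t x), (t (gmul (ginv g) x)); reflexivity.
  - intros [x b]; simpl. rewrite gmulA, gmulVl, gmul1l.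
    destruct b, (t x), (t (gmul g x)); reflexivity.
Defined.

Lemma twist_hom t : is_hom G (perm_group (G * bool)) (twist t).
Proof.
  intros g h. apply perm_ext. intros [x b]. simpl. rewrite gmulA. f_equal.
  destruct b, (t x), (t (gmul h x)), (t (gmul (gmul g h) x)); reflexivity.
Qed.

Theorem generation : forall g, Sg g.
Proof.
  assert (E : forall z, twist sb z = twist (fun _ => false) z).
  { intro z; apply (@fp_unique (perm_group (G * bool)) (twist sb) (twist (fun _ => false))); try apply twist_hom.
    - intros x. apply perm_ext. intros [y b]. simpl. f_equal.
      change (i1 x) with (iL (inl x)). rewrite sb_left. destruct b, (sb y); reflexivity.
    - intros x. apply perm_ext. intros [y b]. simpl. f_equal.
      change (i2 x) with (iL (inr x)). rewrite sb_left. destruct b, (sb y); reflexivity. }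
  intro g. pose proof (f_equal (fun p => snd (pf p (gone, false))) (E g)) as E2.
  simpl in E2. rewrite gmul1r in E2.
  assert (H1 : sb gone = true).
  { unfold sb. destruct (emi (Sg gone)) as [_|n]; [reflexivity|]. exfalso; apply n. exists []. reflexivity. }
  rewrite H1 in E2. unfold sb in E2. destruct (emi (Sg g)); [assumption|discriminate].
Qed.

(* van der Waerden action *)
Definition W := {w : list L | reduced w}.
Lemma sigW_ext (p q : W) : proj1_sig p = proj1_sig q -> p = q.
Proof. destruct p, q; simpl; intro; subst; f_equal; apply proof_irrelevance. Qed.

Definition rho1 (x : D1) : perm W.
Proof.
  refine (Perm _ (fun w => exist _ (act1 x (proj1_sig w)) (act1_reduced x (proj1_sig w) (proj2_sig w)))
                 (fun w => exist _ (act1 (ginv x) (proj1_sig w)) (act1_reduced (ginv x) (proj1_sig w) (proj2_sig w))) _ _).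
  - intros [w h]; apply sigW_ext; simpl. rewrite act1_mul, gmulVr, act1_one; auto.
  - intros [w h]; apply sigW_ext; simpl. rewrite act1_mul, gmulVl, act1_one; auto.
Defined.
Definition rho2 (x : D2) : perm W.
Proof.
  refine (Perm _ (fun w => exist _ (act2 x (proj1_sig w)) (act2_reduced x (proj1_sig w) (proj2_sig w)))
                 (fun w => exist _ (act2 (ginv x) (proj1_sig w)) (act2_reduced (ginv x) (proj1_sig w) (proj2_sig w))) _ _).
  - intros [w h]; apply sigW_ext; simpl. rewrite act2_mul, gmulVr, act2_one; auto.
  - intros [w h]; apply sigW_ext; simpl. rewrite act2_mul, gmulVl, act2_one; auto.
Defined.
Lemma rho1_hom : is_hom D1 (perm_group W) rho1.
Proof. intros x y. apply perm_ext. intros [w h]. apply sigW_ext. simpl. now rewrite act1_mul. Qed.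
Lemma rho2_hom : is_hom D2 (perm_group W) rho2.
Proof. intros x y. apply perm_ext. intros [w h]. apply sigW_ext. simpl. now rewrite act2_mul. Qed.

Definition rho_sig := constructive_indefinite_description _
  (proj2 (proj2 FP) (perm_group W) rho1 rho2 rho1_hom rho2_hom).
Definition rho : G -> perm W := proj1_sig rho_sig.
Lemma rho_hom : is_hom G (perm_group W) rho.
Proof. exact (proj1 (proj2_sig rho_sig)). Qed.
Lemma rho_i1 x : rho (i1 x) = rho1 x.
Proof. exact (proj1 (proj2 (proj2_sig rho_sig)) x). Qed.
Lemma rho_i2 x : rho (i2 x) = rho2 x.
Proof. exact (proj1 (proj2 (proj2 (proj2_sig rho_sig))) x). Qed.

Definition wnil : W := exist _ [] I.
Definition nf (g : G) : list L := proj1_sig (pf (rho g) wnil).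
Lemma nf_reduced g : reduced (nf g).
Proof. exact (proj2_sig (pf (rho g) wnil)). Qed.

Definition actL (l : L) (w : list L) : list L :=
  match l with inl x => act1 x w | inr y => act2 y w end.

Lemma nf_mul_letter l g : nf (gmul (iL l) g) = actL l (nf g).
Proof.
  unfold nf. rewrite rho_hom. simpl. destruct l; simpl; [rewrite rho_i1|rewrite rho_i2]; reflexivity.
Qed.
Lemma nf_one : nf gone = [].
Proof. unfold nf. rewrite (hom_one rho_hom). reflexivity. Qed.

Lemma eval_actL l w : reduced w -> eval (actL l w) = gmul (iL l) (eval w).
Proof.
  intro Hw. destruct l as [x|x]; simpl.
  - destruct w as [|[y|y] r]; simpl; repeat match goal with |- context [emi ?P] => destruct (emi P) end;
      simpl; subst; try rewrite (hom_one hom1); try rewrite gmul1l; try reflexivity.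
    + rewrite gmulA, <- hom1, e, (hom_one hom1), gmul1l. reflexivity.
    + rewrite gmulA, <- hom1. reflexivity.
  - destruct w as [|[y|y] r]; simpl; repeat match goal with |- context [emi ?P] => destruct (emi P) end;
      simpl; subst; try rewrite (hom_one hom2); try rewrite gmul1l; try reflexivity.
    + rewrite gmulA, <- hom2, e, (hom_one hom2), gmul1l. reflexivity.
    + rewrite gmulA, <- hom2. reflexivity.
Qed.

Lemma eval_nf g : eval (nf g) = g.
Proof.
  destruct (generation g) as [w E]. subst g. induction w as [|l w IH].
  - simpl. now rewrite nf_one.
  - simpl. rewrite nf_mul_letter, eval_actL by apply nf_reduced. now rewrite IH.
Qed.

Lemma nf_eval w : reduced w -> nf (eval w) = w.
Proof.
  induction w as [|l w IH]; intro H.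
  - apply nf_one.
  - simpl. rewrite nf_mul_letter, IH by exact (proj2 (proj2 H)).
    destruct l; simpl; [apply act1_cons|apply act2_cons]; exact H.
Qed.

Lemma nf_len w : length (nf (eval w)) <= length w.
Proof.
  induction w as [|l w IH].
  - simpl. rewrite nf_one. simpl; lia.
  - simpl. rewrite nf_mul_letter. destruct l; simpl.
    + pose proof (act1_len c (nf (eval w))). lia.
    + pose proof (act2_len c (nf (eval w))). lia.
Qed.

Lemma nf_inj g h : nf g = nf h -> g = h.
Proof. intro E. now rewrite <- (eval_nf g), <- (eval_nf h), E. Qed.

Lemma eval_red_inj u v : reduced u -> reduced v -> eval u = eval v -> u = v.
Proof. intros Hu Hv E. rewrite <- (nf_eval u Hu), <- (nf_eval v Hv), E. reflexivity. Qed.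

Lemma iL_inv l : iL (linv l) = ginv (iL l).
Proof. apply mul_eq_one, iL_linv. Qed.

Lemma eval_winv w : eval (winv w) = ginv (eval w).
Proof.
  induction w as [|l w IH].
  - simpl. symmetry. apply inv_one.
  - rewrite winv_cons, eval_app, IH. simpl. rewrite inv_mul, gmul1r, iL_inv. reflexivity.
Qed.

Lemma nf_inv g : nf (ginv g) = winv (nf g).
Proof.
  rewrite <- (eval_nf g) at 1. rewrite <- eval_winv. apply nf_eval, reduced_winv, nf_reduced.
Qed.
End FP.

Set Implicit Arguments.

Lemma commute_sym {G : group} (x y : G) : commute x y -> commute y x.
Proof. unfold commute; auto. Qed.
Lemma commute_inv {G : group} (x y : G) : commute x y -> commute (ginv x) y.
Proof.
  unfold commute; intro H. apply (mul_cancel_l x). rewrite gmulA, gmulVr, gmul1l.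
  apply (mul_cancel_r x). rewrite <- !gmulA, gmulVl, gmul1r. symmetry; exact H.
Qed.
Lemma commute_conj {G : group} (c x h : G) :
  commute x (gmul c (gmul h (ginv c))) -> commute (gmul (ginv c) (gmul x c)) h.
Proof.
  unfold commute; intro H.
  apply (mul_cancel_l c). rewrite !gmulA, gmulVr, gmul1l.
  apply (mul_cancel_r (ginv c)). rewrite <- !gmulA, gmulVr, gmul1r.
  rewrite H. rewrite !gmulA. reflexivity.
Qed.
Lemma commute_unconj {G : group} (c x y : G) :
  commute (gmul (ginv c) (gmul x c)) (gmul (ginv c) (gmul y c)) -> commute x y.
Proof.
  unfold commute; intro H.
  assert (E : forall u v : G, gmul (gmul (ginv c) (gmul u c)) (gmul (ginv c) (gmul v c))
                  = gmul (ginv c) (gmul (gmul u v) c)).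
  { intros u v. rewrite !gmulA. f_equal. rewrite <- !gmulA. f_equal. f_equal.
    rewrite gmulA, gmulVr, gmul1l. reflexivity. }
  rewrite !E in H. apply mul_cancel_l in H. apply mul_cancel_r in H. exact H.
Qed.

Section FPT.
Variables (D1 D2 G : group) (i1 : D1 -> G) (i2 : D2 -> G).
Hypothesis FP : is_free_product D1 D2 G i1 i2.
Notation L := (lt D1 D2).
Notation ev := (eval G i1 i2).
Notation nf := (nf FP).
Notation iL := (iL G i1 i2).

Lemma merge_letter (l l' : L) : side l = side l' -> exists m, iL m = gmul (iL l) (iL l').
Proof.
  destruct l as [a|a], l' as [b|b]; simpl; intro H; try discriminate.
  - exists (inl (gmul a b)). simpl. apply (hom1 FP).
  - exists (inr (gmul a b)). simpl. apply (hom2 FP).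
Qed.

Lemma nf_concat u v : reduced (u ++ v) -> nf (gmul (ev u) (ev v)) = u ++ v.
Proof. intro H. rewrite <- eval_app. apply nf_eval; exact H. Qed.

Lemma nf_merge u l l' v : side l = side l' ->
  length (nf (gmul (ev (u ++ [l])) (ev (l' :: v)))) <= length u + S (length v).
Proof.
  intro Hs. destruct (merge_letter l l' Hs) as [m Hm].
  assert (E : gmul (ev (u ++ [l])) (ev (l' :: v)) = ev (u ++ m :: v)).
  { rewrite !eval_app. simpl. rewrite gmul1r, Hm, <- !gmulA. reflexivity. }
  rewrite E. pose proof (nf_len FP (u ++ m :: v)). rewrite length_app in H. simpl in H. lia.
Qed.

Lemma nf_nil_one g : nf g = [] -> g = gone.
Proof. intro H. rewrite <- (eval_nf FP g), H. reflexivity. Qed.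

Definition CR (k : list L) : Prop :=
  reduced k /\ exists c k' d, k = c :: k' ++ [d] /\ side c <> side d.

Lemma side_neq_cases (s1 s2 s3 : bool) : s1 <> s2 -> s3 = s1 \/ s3 = s2.
Proof. destruct s1, s2, s3; auto; congruence. Qed.

Lemma cr_centralizer x h : CR (nf h) -> commute x h ->
  x = gone \/ nf x ++ nf h = nf h ++ nf x \/
  nf (ginv x) ++ nf h = nf h ++ nf (ginv x).
Proof.
  intros [Hk [c [k' [d [Ek Hcd]]]]] Hxh.
  destruct (nf x) as [|a w1] eqn:Ew.
  { left. now apply nf_nil_one. }
  right. pose proof (nf_reduced FP x) as Hw. rewrite Ew in Hw.
  assert (Hk' : reduced (c :: k' ++ [d])) by (rewrite <- Ek; exact Hk).
  destruct (exists_last (l := a :: w1) ltac:(discriminate)) as [w2 [b Eb]].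
  assert (Hxh' : gmul (ev (nf x)) (ev (nf h)) = gmul (ev (nf h)) (ev (nf x))).
  { rewrite !(eval_nf FP). exact Hxh. }
  rewrite Ew, Ek in Hxh'.
  destruct (side_neq_cases (side a) Hcd) as [Ha|Ha];
  destruct (side_neq_cases (side b) Hcd) as [Hb|Hb].
  - (* a ~ c, b ~ c : merge on x h, concat on h x *)
    exfalso.
    assert (R : reduced ((c :: k' ++ [d]) ++ a :: w1)).
    { apply reduced_app_intro; auto.
      unfold junc. rewrite app_comm_cons, lastl_snoc. simpl. congruence. }
    pose proof (nf_concat _ _ R) as E1.
    rewrite <- Hxh' in E1. rewrite Eb in E1.
    pose proof (nf_merge w2 b c (k' ++ [d]) ltac:(congruence)) as E2.
    rewrite E1 in E2. apply (f_equal (@length _)) in Eb.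
    rewrite !length_app in E2, Eb. simpl in *. rewrite !length_app in E2. simpl in E2. lia.
  - (* a ~ c, b ~ d : aligned *)
    left.
    assert (R1 : reduced ((a :: w1) ++ (c :: k' ++ [d]))).
    { apply reduced_app_intro; auto.
      unfold junc. rewrite Eb, lastl_snoc. simpl. congruence. }
    assert (R2 : reduced ((c :: k' ++ [d]) ++ a :: w1)).
    { apply reduced_app_intro; auto.
      unfold junc. rewrite app_comm_cons, lastl_snoc. simpl. congruence. }
    rewrite Ek. rewrite <- (nf_concat _ _ R1), <- (nf_concat _ _ R2), Hxh'. reflexivity.
  - (* a ~ d, b ~ c : anti-aligned, use inverse *)
    right. rewrite (nf_inv FP). rewrite Ew.
    set (u := winv (a :: w1)).
    assert (Hu : reduced u) by (apply reduced_winv; exact Hw).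
    assert (Hux : ev u = ginv x) by (unfold u; rewrite <- Ew, (eval_winv FP), (eval_nf FP); reflexivity).
    assert (Hcomm : commute (ginv x) h) by (apply commute_inv; exact Hxh).
    assert (Hxh2 : gmul (ev u) (ev (nf h)) = gmul (ev (nf h)) (ev u)).
    { rewrite Hux, (eval_nf FP). exact Hcomm. }
    rewrite Ek in Hxh2. rewrite Ek.
    assert (R1 : reduced (u ++ (c :: k' ++ [d]))).
    { apply reduced_app_intro; auto.
      unfold junc. unfold u. rewrite lastl_winv. simpl. rewrite side_linv. congruence. }
    assert (R2 : reduced ((c :: k' ++ [d]) ++ u)).
    { apply reduced_app_intro; auto.
      unfold junc. rewrite app_comm_cons, lastl_snoc. unfold u. rewrite hd_winv, Eb, lastl_snoc.
      simpl. rewrite side_linv. congruence. }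
    rewrite <- (nf_concat _ _ R1), <- (nf_concat _ _ R2), Hxh2. reflexivity.
  - (* a ~ d, b ~ d : concat on x h, merge on h x *)
    exfalso.
    assert (R : reduced ((a :: w1) ++ (c :: k' ++ [d]))).
    { apply reduced_app_intro; auto.
      unfold junc. rewrite Eb, lastl_snoc. simpl. congruence. }
    pose proof (nf_concat _ _ R) as E1.
    rewrite Hxh' in E1.
    pose proof (nf_merge (c :: k') d a w1 ltac:(congruence)) as E2.
    rewrite app_comm_cons in E1. rewrite E1 in E2.
    rewrite ?length_app in E2; simpl in E2; rewrite ?length_app in E2; simpl in E2; lia.
Qed.
End FPT.

Set Implicit Arguments.


Lemma mulKV {G : group} (x z : G) : gmul x (gmul (ginv x) z) = z.
Proof. now rewrite gmulA, gmulVr, gmul1l. Qed.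
Lemma mulVK {G : group} (x z : G) : gmul (ginv x) (gmul x z) = z.
Proof. now rewrite gmulA, gmulVl, gmul1l. Qed.
Ltac gnorm := repeat progress (rewrite <- ?gmulA; rewrite ?mulKV, ?mulVK, ?gmulVr, ?gmulVl, ?gmul1l, ?gmul1r).
Ltac gnormH H := repeat progress (rewrite <- ?gmulA in H; rewrite ?mulKV, ?mulVK, ?gmulVr, ?gmulVl, ?gmul1l, ?gmul1r in H).

Lemma conj_algebra {G : group} (A y E Dd : G) :
  gmul (gmul A (gmul y E)) Dd = gmul Dd (gmul A (gmul y E)) ->
  gmul y (gmul E (gmul Dd (ginv E))) = gmul (gmul (ginv A) (gmul Dd A)) y.
Proof.
  intro H. apply (mul_cancel_l A). apply (mul_cancel_r E). gnorm. gnormH H. exact H.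
Qed.

Lemma conj_ne {G : group} (a d : G) : d <> gone -> gmul (ginv a) (gmul d a) <> gone.
Proof.
  intros Hd H. apply Hd. apply (mul_cancel_l (ginv a)). apply (mul_cancel_r a). gnorm. exact H.
Qed.
Lemma conj_ne' {G : group} (e d : G) : d <> gone -> gmul e (gmul d (ginv e)) <> gone.
Proof.
  intros Hd H. apply (conj_ne (ginv e) Hd). rewrite inv_inv. exact H.
Qed.

Lemma lastl_app_ne {A B : group} (p r : list (lt A B)) : r <> [] -> lastl (p ++ r) = lastl r.
Proof.
  intro Hr. induction p as [|x p IH]; [reflexivity|].
  simpl app. rewrite lastl_cons; [exact IH|]. destruct p, r; simpl; congruence.
Qed.

Set Warnings "-intuition-auto-with-star".
Section FPT2.
Variables (D1 D2 G : group) (i1 : D1 -> G) (i2 : D2 -> G).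
Hypothesis FP : is_free_product D1 D2 G i1 i2.
Notation L := (lt D1 D2).
Notation ev := (eval G i1 i2).
Notation nf := (nf FP).
Notation iL := (iL G i1 i2).

Lemma cr_abelian h x y : CR (nf h) -> commute x h -> commute y h -> commute x y.
Proof.
  intros Hh Hx Hy.
  assert (Hne : nf h <> []).
  { destruct Hh as [_ [c [k' [d [E _]]]]]. rewrite E. discriminate. }
  assert (Key : forall x' y', nf x' ++ nf h = nf h ++ nf x' -> nf y' ++ nf h = nf h ++ nf y' ->
             commute x' y').
  { intros x' y' E1 E2. pose proof (com_trans _ _ _ _ Hne E1 E2) as E.
    unfold commute. rewrite <- (eval_nf FP x'), <- (eval_nf FP y'), <- !(eval_app G i1 i2).
    now rewrite E. }
  destruct (cr_centralizer FP Hh Hx) as [Ex|[Ex|Ex]];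
  [subst x; unfold commute; now rewrite gmul1l, gmul1r|..];
  (destruct (cr_centralizer FP Hh Hy) as [Ey|[Ey|Ey]];
  [subst y; unfold commute; now rewrite gmul1l, gmul1r|..]).
  - now apply Key.
  - rewrite <- (inv_inv y). apply commute_sym, commute_inv, commute_sym. now apply Key.
  - rewrite <- (inv_inv x). apply commute_inv. now apply Key.
  - rewrite <- (inv_inv x), <- (inv_inv y). apply commute_inv, commute_sym, commute_inv, commute_sym.
    now apply Key.
Qed.

Lemma cr_abelian_conj c h x y : CR (nf h) -> commute x (gmul c (gmul h (ginv c))) ->
  commute y (gmul c (gmul h (ginv c))) -> commute x y.
Proof.
  intros Hh Hx Hy. apply (commute_unconj c).
  apply (cr_abelian (h := h)); auto; apply commute_conj; auto.
Qed.

Lemma lemmaM mid d1 d2 : reduced mid -> (exists b r, mid = inr b :: r) ->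
  (exists r b, mid = r ++ [inr b]) -> d1 <> gone -> d2 <> gone ->
  gmul (ev mid) (i1 d2) = gmul (i1 d1) (ev mid) -> False.
Proof.
  intros Hm [b [r Er]] [r' [b' Er']] H1 H2 E.
  assert (R1 : reduced (mid ++ [@inl D1 D2 d2])).
  { apply reduced_app_intro; auto. simpl; auto.
    unfold junc. rewrite Er', lastl_snoc. simpl. discriminate. }
  assert (R2 : reduced (@inl D1 D2 d1 :: mid)).
  { rewrite Er in *. simpl in *. intuition. }
  assert (E' : ev (mid ++ [inl d2]) = ev (inl d1 :: mid)).
  { rewrite (eval_app G i1 i2). simpl. rewrite gmul1r. exact E. }
  pose proof (eval_red_inj FP _ _ R1 R2 E') as E2.
  rewrite Er in E2. simpl in E2. discriminate.
Qed.

Definition stripf (w : list L) : D1 * list L :=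
  match w with inl a :: r => (a, r) | _ => (gone, w) end.

Lemma strip_spec w : reduced w ->
  ev w = gmul (i1 (fst (stripf w))) (ev (snd (stripf w))) /\ reduced (snd (stripf w)) /\
  (snd (stripf w) = [] \/ exists b r, snd (stripf w) = inr b :: r) /\
  exists p, w = p ++ snd (stripf w).
Proof.
  intro H. destruct w as [|[a|b] r]; simpl.
  - rewrite (hom_one (hom1 FP)), gmul1l. repeat split; auto. exists []; reflexivity.
  - split; [reflexivity|]. split; [apply H|]. split.
    + destruct r as [|[a'|b'] r']; auto. simpl in H. exfalso; tauto.
      right; eauto.
    + exists [inl a]; reflexivity.
  - rewrite (hom_one (hom1 FP)), gmul1l. split; [reflexivity|]. split; [exact H|].
    split; [right; eauto|]. exists []; reflexivity.
Qed.

Lemma letter_centralizer d x : d <> gone -> commute x (i1 d) -> exists a, x = i1 a.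
Proof.
  intros Hd Hx.
  destruct (strip_spec _ (nf_reduced FP x)) as [S1 [S2 [S3 [p1 S4]]]].
  set (a := fst (stripf (nf x))) in *. set (r := snd (stripf (nf x))) in *.
  assert (Hv : reduced (winv r)) by (apply reduced_winv; exact S2).
  destruct (strip_spec _ Hv) as [T1 [T2 [T3 [p2 T4]]]].
  set (e' := fst (stripf (winv r))) in *. set (r2 := snd (stripf (winv r))) in *.
  assert (Hr : ev r = gmul (ev (winv r2)) (i1 (ginv e'))).
  { rewrite (eval_winv FP), (hom_inv (hom1 FP)), <- inv_mul, <- T1, (eval_winv FP), inv_inv.
    reflexivity. }
  assert (Ex : x = gmul (i1 a) (gmul (ev (winv r2)) (i1 (ginv e')))).
  { rewrite <- Hr, <- S1. symmetry. apply (eval_nf FP). }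
  destruct T3 as [T3|[b [r2' T3]]].
  - exists (gmul a (ginv e')). rewrite Ex, T3. simpl. rewrite gmul1l. symmetry. apply (hom1 FP).
  - exfalso.
    set (e := ginv e') in *.
    assert (Hr2 : r2 <> []) by (rewrite T3; discriminate).
    assert (Hrne : r <> []).
    { intro E0. rewrite E0 in T4. simpl in T4. symmetry in T4. apply app_eq_nil in T4. tauto. }
    destruct S3 as [S3|[b0 [r0 S3]]]; [contradiction|].
    assert (Last : lastl r2 = Some (inr (ginv b0))).
    { rewrite <- (lastl_app_ne p2 Hr2), <- T4, lastl_winv, S3. reflexivity. }
    apply (lemmaM (mid := winv r2) (d1 := gmul (ginv a) (gmul d a)) (d2 := gmul e (gmul d (ginv e)))).
    + apply reduced_winv; exact T2.
    + destruct (winv r2) as [|l0 m0] eqn:Em.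
      * apply (f_equal (@length _)) in Em. rewrite winv_len, T3 in Em. discriminate.
      * pose proof (hd_winv r2) as Hh. rewrite Em, Last in Hh. simpl in Hh. injection Hh as Hh.
        rewrite Hh. eauto.
    + rewrite T3, winv_cons. simpl. eauto.
    + apply conj_ne; exact Hd.
    + apply conj_ne'; exact Hd.
    + rewrite (hom1 FP), (hom1 FP), (hom1 FP), (hom1 FP), !(hom_inv (hom1 FP)).
      apply conj_algebra. rewrite <- Ex. exact Hx.
Qed.
End FPT2.

Set Implicit Arguments.


Section FPT3.
Variables (D1 D2 G : group) (i1 : D1 -> G) (i2 : D2 -> G).
Hypothesis FP : is_free_product D1 D2 G i1 i2.
Notation L := (lt D1 D2).
Notation ev := (eval G i1 i2).
Notation nf := (nf FP).
Notation iL := (iL G i1 i2).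

Definition conj_form (h : G) : Prop :=
  (exists a, a <> gone /\ h = i1 a) \/ (exists b, b <> gone /\ h = i2 b) \/ CR (nf h).

Lemma cyc_red_aux n : forall g, length (nf g) <= n -> g <> gone ->
  exists c h, g = gmul c (gmul h (ginv c)) /\ conj_form h.
Proof.
  induction n as [|n IH]; intros g Hl Hg.
  - destruct (nf g) eqn:E; [apply nf_nil_one in E; contradiction|simpl in Hl; lia].
  - assert (Triv : g = gmul gone (gmul g (ginv gone))) by (rewrite inv_one; gnorm; reflexivity).
    pose proof (nf_reduced FP g) as Hr.
    destruct (nf g) as [|l [|l1 w]] eqn:E.
    + apply nf_nil_one in E; contradiction.
    + exists gone, g. split; [exact Triv|].
      rewrite <- (eval_nf FP g), E. simpl. rewrite gmul1r. destruct Hr as [Hn _].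
      unfold conj_form. destruct l as [a|b]; simpl in Hn; [left; exists a|right; left; exists b]; split; auto.
    + destruct (exists_last (l := l1 :: w) ltac:(discriminate)) as [w2 [l' El]].
      rewrite El in E, Hr, Hl.
      destruct (bool_dec (side l) (side l')) as [Hs|Hs].
      * destruct (merge_letter FP l' l ltac:(congruence)) as [m Hm].
        set (g' := gmul (ginv (iL l)) (gmul g (iL l))).
        assert (Eg : g = gmul (iL l) (gmul (ev w2) (iL l'))).
        { rewrite <- (eval_nf FP g), E. simpl. rewrite (eval_app G i1 i2). simpl. rewrite gmul1r. reflexivity. }
        assert (Eg' : g' = ev (w2 ++ [m])).
        { unfold g'. rewrite Eg, (eval_app G i1 i2). simpl. rewrite gmul1r, Hm. gnorm. reflexivity. }
        assert (Hl' : length (nf g') <= n).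
        { rewrite Eg'. pose proof (nf_len FP (w2 ++ [m])). simpl in *; rewrite ?length_app in *; simpl in *; lia. }
        assert (Hg' : g' <> gone).
        { intro H0. apply Hg. unfold g' in H0. apply (mul_cancel_l (ginv (iL l))).
          apply (mul_cancel_r (iL l)). rewrite <- gmulA, H0. gnorm. reflexivity. }
        destruct (IH g' Hl' Hg') as [c [h [Ech Hh]]].
        exists (gmul (iL l) c), h. split; [|exact Hh].
        transitivity (gmul (iL l) (gmul g' (ginv (iL l)))).
        -- unfold g'. gnorm. reflexivity.
        -- rewrite Ech, inv_mul. gnorm. reflexivity.
      * exists gone, g. split; [exact Triv|]. right; right.
        split; [rewrite E; exact Hr|]. exists l, w2, l'. split; [exact E|exact Hs].
Qed.

Lemma cyc_red g : g <> gone -> exists c h, g = gmul c (gmul h (ginv c)) /\ conj_form h.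
Proof. intro H. exact (cyc_red_aux (le_n _) H). Qed.

Lemma reduced_alt (a : D1) (b : D2) k : a <> gone -> b <> gone ->
  reduced (lpow _ [@inl D1 D2 a; inr b] k).
Proof.
  intros Ha Hb. induction k as [|k IH]; simpl; auto.
  repeat split; auto; try discriminate. destruct k; simpl; auto; discriminate.
Qed.

Lemma eval_alt (a : D1) (b : D2) k : ev (lpow _ [inl a; inr b] k) = gpow (gmul (i1 a) (i2 b)) k.
Proof.
  induction k as [|k IH]; simpl; [reflexivity|]. rewrite IH. gnorm. reflexivity.
Qed.

Lemma len_alt (a : D1) (b : D2) k : length (lpow _ [@inl D1 D2 a; inr b] k) = 2 * k.
Proof. induction k; simpl; [reflexivity|]. rewrite IHk. lia. Qed.

Lemma lastl_alt (a : D1) (b : D2) k : lastl (lpow _ [@inl D1 D2 a; inr b] (S k)) = Some (inr b).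
Proof.
  induction k as [|k IH]; [reflexivity|].
  change (lpow _ [@inl D1 D2 a; inr b] (S (S k))) with (inl a :: inr b :: lpow _ [@inl D1 D2 a; inr b] (S k)).
  rewrite lastl_cons by discriminate. rewrite lastl_cons by (simpl; discriminate). exact IH.
Qed.

Lemma powK (a : D1) (b : D2) k e : a <> gone -> b <> gone -> 1 <= k ->
  gpow (gmul (i1 a) (i2 b)) k = i1 e -> False.
Proof.
  intros Ha Hb Hk E.
  pose proof (nf_eval FP _ (reduced_alt k Ha Hb)) as N.
  rewrite eval_alt, E in N.
  pose proof (nf_len FP [inl e]) as N2. simpl in N2. rewrite gmul1r in N2.
  rewrite N, len_alt in N2. simpl in N2. lia.
Qed.

Lemma powAb (a a' : D1) (b : D2) k m : a <> gone -> a' <> gone -> b <> gone -> a <> a' ->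
  1 <= k -> 1 <= m ->
  commute (gpow (gmul (i1 a) (i2 b)) k) (gpow (gmul (i1 a') (i2 b)) m) -> False.
Proof.
  intros Ha Ha' Hb Hne Hk Hm C.
  destruct k as [|k]; [lia|]. destruct m as [|m]; [lia|].
  set (U := lpow _ [@inl D1 D2 a; inr b] (S k)). set (V := lpow _ [@inl D1 D2 a'; inr b] (S m)).
  assert (R1 : reduced (U ++ V)).
  { apply reduced_app_intro; try apply reduced_alt; auto.
    unfold junc. unfold U. rewrite lastl_alt. simpl. discriminate. }
  assert (R2 : reduced (V ++ U)).
  { apply reduced_app_intro; try apply reduced_alt; auto.
    unfold junc. unfold V. rewrite lastl_alt. simpl. discriminate. }
  assert (E : ev (U ++ V) = ev (V ++ U)).
  { rewrite !(eval_app G i1 i2). unfold U, V. rewrite !eval_alt. exact C. }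
  pose proof (eval_red_inj FP _ _ R1 R2 E) as E2.
  unfold U, V in E2. simpl in E2. injection E2. intros. congruence.
Qed.
End FPT3.

Set Implicit Arguments.


Lemma pigeon {X : Type} (l : list X) (f : nat -> X) : (forall i, In (f i) l) ->
  exists i j, i < j /\ f i = f j.
Proof.
  intro Hf. apply NNPP. intro Hn.
  assert (Inj : forall i j, f i = f j -> i = j).
  { intros i j E. destruct (lt_eq_lt_dec i j) as [[L|L]|L]; auto; exfalso; apply Hn; eauto. }
  assert (ND : NoDup (map f (seq 0 (S (length l))))).
  { apply NoDup_map_NoDup_ForallPairs; [intros x y _ _; apply Inj|apply seq_NoDup]. }
  pose proof (@NoDup_incl_length _ _ l ND) as Hl.
  assert (incl (map f (seq 0 (S (length l)))) l).
  { intros x Hx. apply in_map_iff in Hx. destruct Hx as [i [<- _]]. apply Hf. }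
  specialize (Hl H). rewrite length_map, length_seq in Hl. lia.
Qed.

Lemma infinite_of_inj {X : Type} (S : X -> Prop) (f : nat -> X) :
  (forall i j, f i = f j -> i = j) -> (forall i, S (f i)) -> ~ finite_set S.
Proof.
  intros Inj HS [l Hl]. destruct (pigeon l f (fun i => Hl _ (HS i))) as [i [j [L E]]].
  apply Inj in E. lia.
Qed.

Lemma gpow_add {G : group} (g : G) i d : gpow g (i + d) = gmul (gpow g i) (gpow g d).
Proof. induction i; simpl; [now rewrite gmul1l|]. rewrite IHi. apply gmulA. Qed.

Lemma gpow_conj {G : group} (c u : G) k :
  gpow (gmul c (gmul u (ginv c))) k = gmul c (gmul (gpow u k) (ginv c)).
Proof. induction k; simpl; [gnorm; reflexivity|]. rewrite IHk. gnorm. reflexivity. Qed.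

Definition subgroup_pred {G : group} (H : G -> Prop) :=
  H gone /\ (forall x y, H x -> H y -> H (gmul x y)) /\ (forall x, H x -> H (ginv x)).

Lemma power_in {G : group} (H : G -> Prop) : subgroup_pred H -> finite_index G H ->
  forall g, exists k, 1 <= k /\ H (gpow g k).
Proof.
  intros [H1 [HM HI]] [l Hl] g.
  set (f := fun i => proj1_sig (constructive_indefinite_description _ (Hl (gpow g i)))).
  assert (Hf : forall i, In (f i) l /\ exists h, H h /\ gpow g i = gmul (f i) h).
  { intro i. unfold f. destruct (constructive_indefinite_description _ (Hl (gpow g i))) as [t [h [Ht [Hh E]]]].
    simpl. eauto. }
  destruct (pigeon l f (fun i => proj1 (Hf i))) as [i [j [L E]]].
  exists (j - i). split; [lia|].
  destruct (proj2 (Hf i)) as [hi [Hhi Ei]]. destruct (proj2 (Hf j)) as [hj [Hhj Ej]].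
  assert (Ej' : gpow g j = gmul (gpow g i) (gpow g (j - i))).
  { rewrite <- gpow_add. f_equal. lia. }
  assert (R : gpow g (j - i) = gmul (ginv hi) hj).
  { apply (mul_cancel_l (gpow g i)). rewrite <- Ej', Ej, Ei, E. gnorm. reflexivity. }
  rewrite R. apply HM; auto.
Qed.

Lemma fp_swap (D1 D2 G : group) (i1 : D1 -> G) (i2 : D2 -> G) :
  is_free_product D1 D2 G i1 i2 -> is_free_product D2 D1 G i2 i1.
Proof.
  intros [h1 [h2 U]]. split; [exact h2|]. split; [exact h1|].
  intros H f1 f2 Hf1 Hf2. destruct (U H f2 f1 Hf2 Hf1) as [f [Hf [E1 [E2 Uf]]]].
  exists f. split; [exact Hf|]. split; [exact E2|]. split; [exact E1|].
  intros f' Hf' E1' E2'. apply Uf; auto.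
Qed.

Section Final.
Variables (D1 D2 G : group) (i1 : D1 -> G) (i2 : D2 -> G).
Hypothesis FP : is_free_product D1 D2 G i1 i2.

Lemma final_letter (A B : G -> Prop) (a b : D1) (e : D2) c d :
  (forall x y, A x -> B y -> commute x y) ->
  (forall g, exists k, 1 <= k /\ exists x y, A x /\ B y /\ gpow g k = gmul x y) ->
  (exists y, B y /\ y <> gone) ->
  A (gmul c (gmul (i1 d) (ginv c))) -> d <> gone -> a <> gone -> e <> gone -> False.
Proof.
  intros Hc Hp [b0 [Hb0 Hb0n]] Ha0 Hd Ha He.
  assert (InK : forall y h, commute y (gmul c (gmul (i1 h) (ginv c))) -> h <> gone ->
            exists f, y = gmul c (gmul (i1 f) (ginv c))).
  { intros y h Cy Hh. apply commute_conj in Cy.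
    destruct (letter_centralizer FP Hh Cy) as [f Ef]. exists f.
    rewrite <- Ef. gnorm. reflexivity. }
  destruct (InK b0 d (commute_sym (Hc _ _ Ha0 Hb0)) Hd) as [f0 Ef0].
  assert (Hf0 : f0 <> gone).
  { intro E0. apply Hb0n. rewrite Ef0, E0, (hom_one (hom1 FP)). gnorm. reflexivity. }
  destruct (Hp (gmul c (gmul (gmul (i1 a) (i2 e)) (ginv c)))) as [k [Hk [x [y [Hx [Hy E]]]]]].
  destruct (InK x f0 ltac:(rewrite <- Ef0; apply Hc; auto) Hf0) as [fx Efx].
  destruct (InK y d (commute_sym (Hc _ _ Ha0 Hy)) Hd) as [fy Efy].
  rewrite gpow_conj, Efx, Efy in E.
  assert (E2 : gpow (gmul (i1 a) (i2 e)) k = i1 (gmul fx fy)).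
  { rewrite (hom1 FP). apply (mul_cancel_l c). apply (mul_cancel_r (ginv c)).
    rewrite <- !gmulA. rewrite E. gnorm. reflexivity. }
  exact (powK FP _ Ha He Hk E2).
Qed.

Lemma final_ab (A B : G -> Prop) (a a' : D1) (b : D2) :
  (forall x y, A x -> B y -> commute x y) ->
  (forall x y, A x -> A y -> commute x y) ->
  (forall x y, B x -> B y -> commute x y) ->
  (forall g, exists k, 1 <= k /\ exists x y, A x /\ B y /\ gpow g k = gmul x y) ->
  a <> gone -> a' <> gone -> b <> gone -> a = a'.
Proof.
  intros Hc HA HB Hp Ha Ha' Hb. apply NNPP. intro Hne.
  destruct (Hp (gmul (i1 a) (i2 b))) as [k [Hk [x [y [Hx [Hy E]]]]]].
  destruct (Hp (gmul (i1 a') (i2 b))) as [m [Hm [x' [y' [Hx' [Hy' E']]]]]].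
  apply (powAb FP Ha Ha' Hb Hne Hk Hm). unfold commute. rewrite E, E'.
  transitivity (gmul (gmul x x') (gmul y y')).
  { rewrite <- !gmulA. f_equal. rewrite gmulA, <- (Hc x' y Hx' Hy), <- gmulA. reflexivity. }
  { rewrite (HA x x' Hx Hx'), (HB y y' Hy Hy'). rewrite <- !gmulA. f_equal.
    rewrite gmulA, (Hc x y' Hx Hy'), <- gmulA. reflexivity. }
Qed.
End Final.

Set Implicit Arguments.

Lemma nontriv_elt {G : group} (S : G -> Prop) : ~ finite_set S -> exists x, S x /\ x <> gone.
Proof.
  intro H. apply NNPP. intro Hn. apply H. exists [gone]. intros x Hx.
  left. apply NNPP. intro Hne. apply Hn. exists x. split; auto.
Qed.

Theorem forward (D1 D2 G : group) (i1 : D1 -> G) (i2 : D2 -> G) :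
  is_free_product D1 D2 G i1 i2 -> nontrivial D1 -> nontrivial D2 ->
  presentable_by_product G ->
  (forall a a' : D1, a <> gone -> a' <> gone -> a = a') /\
  (forall b b' : D2, b <> gone -> b' <> gone -> b = b').
Proof.
  intros FP [a1 Ha1] [e1 He1] [Hinf [G1 [G2 [phi [Hphi [Hfi [HA HB]]]]]]].
  set (A := image (fun a : G1 => phi (a, gone))) in *.
  set (B := image (fun b : G2 => phi (gone, b))) in *.
  assert (Hc : forall x y, A x -> B y -> commute x y).
  { intros x y [a <-] [b <-]. unfold commute. rewrite <- !Hphi. simpl.
    rewrite !gmul1l, !gmul1r. reflexivity. }
  assert (Hsub : subgroup_pred (image phi)).
  { split; [|split].
    - exists (gone, gone). exact (hom_one Hphi).
    - intros x y [p <-] [q <-]. exists (gmul p q). apply Hphi.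
    - intros x [p <-]. exists (ginv p). apply (hom_inv Hphi). }
  assert (Hp : forall g, exists k, 1 <= k /\ exists x y, A x /\ B y /\ gpow g k = gmul x y).
  { intro g. destruct (power_in Hsub Hfi g) as [k [Hk [[a b] E]]].
    exists k. split; [exact Hk|]. exists (phi (a, gone)), (phi (gone, b)).
    split; [exists a; reflexivity|]. split; [exists b; reflexivity|].
    rewrite <- E, <- Hphi. simpl. rewrite gmul1l, gmul1r. reflexivity. }
  assert (Hc' : forall x y, B x -> A y -> commute x y).
  { intros. apply commute_sym. auto. }
  assert (Hp' : forall g, exists k, 1 <= k /\ exists x y, B x /\ A y /\ gpow g k = gmul x y).
  { intro g. destruct (Hp g) as [k [Hk [x [y [Hx [Hy E]]]]]]. exists k. split; [exact Hk|].
    exists y, x. repeat split; auto. rewrite E. apply Hc; auto. }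
  destruct (nontriv_elt HA) as [a0 [Ha0 Ha0n]].
  destruct (nontriv_elt HB) as [b0 [Hb0 Hb0n]].
  assert (Ab : (forall x y, A x -> A y -> commute x y) /\ (forall x y, B x -> B y -> commute x y)).
  { destruct (cyc_red FP Ha0n) as [c [h [Eh [[d [Hd E]]|[[d [Hd E]]|Hcr]]]]].
    - exfalso. subst h. rewrite Eh in Ha0.
      exact (final_letter FP A B a1 c Hc Hp (ex_intro _ b0 (conj Hb0 Hb0n)) Ha0 Hd Ha1 He1).
    - exfalso. subst h. rewrite Eh in Ha0.
      exact (final_letter (fp_swap FP) A B e1 c Hc Hp (ex_intro _ b0 (conj Hb0 Hb0n)) Ha0 Hd He1 Ha1).
    - destruct (cyc_red FP Hb0n) as [c' [h' [Eh' [[d [Hd E]]|[[d [Hd E]]|Hcr']]]]].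
      + exfalso. subst h'. rewrite Eh' in Hb0.
        exact (final_letter FP B A a1 c' Hc' Hp' (ex_intro _ a0 (conj Ha0 Ha0n)) Hb0 Hd Ha1 He1).
      + exfalso. subst h'. rewrite Eh' in Hb0.
        exact (final_letter (fp_swap FP) B A e1 c' Hc' Hp' (ex_intro _ a0 (conj Ha0 Ha0n)) Hb0 Hd He1 Ha1).
      + split.
        * intros x y Hx Hy. apply (cr_abelian_conj FP c' h' Hcr'); rewrite <- Eh'; apply Hc; auto.
        * intros x y Hx Hy. apply (cr_abelian_conj FP c h Hcr); rewrite <- Eh; apply Hc'; auto. }
  destruct Ab as [HAA HBB]. split.
  - intros a a' Ha Ha'. exact (final_ab FP A B Hc HAA HBB Hp Ha Ha' He1).
  - intros b b' Hb Hb'. exact (final_ab (fp_swap FP) A B Hc HAA HBB Hp Hb Hb' Ha1).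
Qed.

Set Implicit Arguments.


Lemma iso_Z2 (D : group) : nontrivial D -> (forall a a' : D, a <> gone -> a' <> gone -> a = a') ->
  isomorphic D Z2.
Proof.
  intros [a Ha] U.
  assert (Aa : gmul a a = gone).
  { apply NNPP; intro H. apply Ha. pose proof (U _ _ H Ha) as E.
    apply (mul_cancel_l a). rewrite E, gmul1r. reflexivity. }
  assert (Cx : forall x : D, x = gone \/ x = a).
  { intro x. destruct (classic (x = gone)); [left; auto|right; apply U; auto]. }
  exists (fun x => if emi (x = gone) then false else true).
  exists (fun bo : Z2 => if bo then a else gone).
  repeat split.
  - intros x y. simpl.
    destruct (Cx x) as [-> | ->], (Cx y) as [-> | ->];
      rewrite ?gmul1l, ?gmul1r, ?Aa;
      repeat match goal with |- context [emi ?P] => destruct (emi P) end; simpl; congruence.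
  - intros [|] [|]; simpl; rewrite ?gmul1l, ?gmul1r, ?Aa; reflexivity.
  - intros x. destruct (emi (x = gone)); [congruence|]. symmetry; apply U; auto.
  - intros [|]; simpl; destruct (emi _); congruence.
Qed.

Lemma from_iso (D : group) : isomorphic D Z2 ->
  exists a : D, a <> gone /\ gmul a a = gone /\ forall x, x = gone \/ x = a.
Proof.
  intros [f [g [Hf [Hg [gf fg]]]]].
  assert (g0 : g false = gone) by exact (hom_one Hg).
  exists (g true). split; [|split].
  - intro E. rewrite <- g0 in E. apply (f_equal f) in E. rewrite !fg in E. discriminate.
  - rewrite <- Hg. simpl. exact g0.
  - intro x. rewrite <- (gf x). destruct (f x); [right|left]; auto.
Qed.

Definition Zg : group.
Proof.
  refine (@Group Z Z.add 0%Z Z.opp _ _ _ _ _); intros; lia.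
Defined.

Definition zpow {G : group} (u : G) (n : Z) : G :=
  if Z.leb 0 n then gpow u (Z.to_nat n) else gpow (ginv u) (Z.to_nat (- n)).

Lemma gpow_S_r {G : group} (u : G) k : gpow u (S k) = gmul (gpow u k) u.
Proof. replace (S k) with (k + 1) by lia. rewrite gpow_add. simpl. rewrite gmul1r. reflexivity. Qed.

Lemma zpow_succ {G : group} (u : G) n : zpow u (n + 1) = gmul (zpow u n) u.
Proof.
  unfold zpow. destruct (Z.leb_spec 0 n) as [H|H]; destruct (Z.leb_spec 0 (n + 1)) as [H'|H']; try lia.
  - replace (Z.to_nat (n + 1)) with (S (Z.to_nat n)) by lia. apply gpow_S_r.
  - assert (n = -1)%Z by lia. subst. simpl. gnorm. reflexivity.
  - replace (Z.to_nat (- n)) with (S (Z.to_nat (- (n + 1)))) by lia.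
    rewrite gpow_S_r. gnorm. reflexivity.
Qed.

Lemma zpow_add {G : group} (u : G) m n : zpow u (m + n) = gmul (zpow u m) (zpow u n).
Proof.
  revert m. induction n using Z.peano_ind; intro m.
  - rewrite Z.add_0_r. unfold zpow at 3. simpl. rewrite gmul1r. reflexivity.
  - replace (m + Z.succ n)%Z with ((m + n) + 1)%Z by lia.
    replace (Z.succ n) with (n + 1)%Z by lia.
    rewrite !zpow_succ, IHn. rewrite gmulA. reflexivity.
  - specialize (IHn m).
    replace (m + n)%Z with ((m + Z.pred n) + 1)%Z in IHn by lia.
    replace n with (Z.pred n + 1)%Z in IHn at 2 by lia.
    rewrite !zpow_succ, gmulA in IHn. apply mul_cancel_r in IHn. exact IHn.
Qed.


Lemma zpow_nat {G : group} (u : G) k : zpow u (Z.of_nat k) = gpow u k.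
Proof.
  unfold zpow. destruct (Z.leb_spec 0 (Z.of_nat k)); [|lia]. rewrite Nat2Z.id. reflexivity.
Qed.
Lemma zpow_one {G : group} (u : G) : zpow u 1 = u.
Proof. unfold zpow. simpl. apply gmul1r. Qed.
Lemma zpow_m1 {G : group} (u : G) : zpow u (-1) = ginv u.
Proof. unfold zpow. simpl. apply gmul1r. Qed.

Theorem backward (D1 D2 G : group) (i1 : D1 -> G) (i2 : D2 -> G) :
  is_free_product D1 D2 G i1 i2 -> isomorphic D1 Z2 -> isomorphic D2 Z2 ->
  presentable_by_product G.
Proof.
  intros FP I1 I2.
  destruct (from_iso I1) as [a [Ha [Aa Ca]]].
  destruct (from_iso I2) as [b [Hb [Bb Cb]]].
  set (u := gmul (i1 a) (i2 b)).
  assert (Inj : forall i j, gpow u i = gpow u j -> i = j).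
  { intros i j E. unfold u in E. rewrite <- !(eval_alt D1 D2 G i1 i2) in E.
    apply (f_equal (nf FP)) in E. rewrite (nf_eval FP _ (reduced_alt D1 D2 i Ha Hb)), (nf_eval FP _ (reduced_alt D1 D2 j Ha Hb)) in E.
    apply (f_equal (@length _)) in E. pose proof (len_alt D1 D2 a b i) as L1; pose proof (len_alt D1 D2 a b j) as L2. unfold lt in E. lia. }
  set (phi := fun p : prod_group Zg Zg => zpow u (fst p + snd p)%Z).
  split.
  { apply (@infinite_of_inj _ _ (fun k => gpow u k) Inj). intros; exact I. }
  exists Zg, Zg, phi. split; [|split; [|split]].
  - intros [m n] [m' n']. unfold phi. simpl. rewrite <- zpow_add. f_equal. lia.
  - exists [gone; i1 a].
    assert (A1 : gmul (i1 a) (i1 a) = gone) by (rewrite <- (hom1 FP), Aa; apply (hom_one (hom1 FP))).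
    assert (B1 : gmul (i2 b) (i2 b) = gone) by (rewrite <- (hom2 FP), Bb; apply (hom_one (hom2 FP))).
    assert (Key : forall x, (exists n, x = zpow u n) \/ (exists n, x = gmul (i1 a) (zpow u n))).
    { intro x. destruct (generation FP x) as [w ->]. induction w as [|[y|y] w IH].
      - left. exists 0%Z. reflexivity.
      - simpl. destruct (Ca y) as [->| ->].
        + rewrite (hom_one (hom1 FP)), gmul1l. exact IH.
        + destruct IH as [[n ->]|[n ->]]; [right|left]; exists n; [reflexivity|].
          rewrite gmulA, A1, gmul1l. reflexivity.
      - simpl. destruct (Cb y) as [->| ->].
        + rewrite (hom_one (hom2 FP)), gmul1l. exact IH.
        + destruct IH as [[n ->]|[n ->]].
          * right. exists (1 + n)%Z. rewrite zpow_add, zpow_one. unfold u. gnorm.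
            rewrite gmulA, A1, gmul1l. reflexivity.
          * left. exists (-1 + n)%Z. rewrite zpow_add, zpow_m1. unfold u. rewrite inv_mul.
            gnorm. rewrite <- (inv_unique _ _ A1), <- (inv_unique _ _ B1). reflexivity. }
    intro x. destruct (Key x) as [[n E]|[n E]].
    + exists gone, (zpow u n). split; [left; reflexivity|]. split.
      * exists (n, 0%Z). unfold phi. simpl. rewrite Z.add_0_r. reflexivity.
      * rewrite gmul1l. exact E.
    + exists (i1 a), (zpow u n). split; [right; left; reflexivity|]. split.
      * exists (n, 0%Z). unfold phi. simpl. rewrite Z.add_0_r. reflexivity.
      * exact E.
  - apply (@infinite_of_inj _ _ (fun k => gpow u k) Inj). intro k.
    exists (Z.of_nat k). unfold phi. simpl. rewrite Z.add_0_r. apply zpow_nat.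
  - apply (@infinite_of_inj _ _ (fun k => gpow u k) Inj). intro k.
    exists (Z.of_nat k). unfold phi. simpl. apply zpow_nat.
Qed.

Theorem corollary9p2 (D1 D2 G : group) (i1 : D1 -> G) (i2 : D2 -> G) :
  nontrivial D1 -> nontrivial D2 ->
  finitely_generated D1 -> finitely_generated D2 ->
  is_free_product D1 D2 G i1 i2 ->
  (presentable_by_product G <-> (isomorphic D1 Z2 /\ isomorphic D2 Z2)).
Proof.
  intros N1 N2 _ _ FP. split.
  - intro P. destruct (forward FP N1 N2 P) as [U1 U2]. split; apply iso_Z2; auto.
  - intros [I1 I2]. exact (backward FP I1 I2).
Qed.
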